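(* Let $\beta:\mathbb{Z}\to\mathbb{R}$ have convergent increments and suppose $\beta(k)>0$ for all $k\in\mathbb{Z}$. Let $D_\beta$ be the operator on $\mathcal{H}$ given by $D_\beta f=\sum_{n}U^n(\beta(\mathbb{K}+n)+\beta(-\mathbb{K}))f_n(\mathbb{K})$ (i.e. $D_\beta f=\beta(\mathbb{K})f+f\beta(-\mathbb{K})$). Then $D_\beta$ is invertible, with $D_\beta^{-1}f=\sum_n U^n(\beta(\mathbb{K}+n)+\beta(-\mathbb{K}))^{-1}f_n(\mathbb{K})$, and for every $f\in\mathcal{H}^+$ (in the domain of $D_\beta^{-1}$) we have $$\langle \Theta f, D_\beta^{-1}f\rangle\ge 0.$$
   Context: Let $\{E_k\}_{k\in\mathbb{Z}}$ be the canonical basis of $\ell^2(\mathbb{Z})$, $UE_k=E_{k+1}$ the bilateral shift, $\mathbb{K}E_k=kE_k$, and for $a:\mathbb{Z}\to\mathbb{C}$, $a(\mathbb{K})E_k=a(k)E_k$. A function $\beta$ has convergent increments if $k\mapsto\beta(k)-\beta(k-1)$ has finite limits as $k\to+\infty$ and as $k\to-\infty$. $\mathcal{H}$ is the Hilbert space of Hilbert–Schmidt operators on $\ell^2(\mathbb{Z})$ with $\langle f,g\rangle=\mathrm{tr}(f^*g)$; each $f\in\mathcal{H}$ is uniquely written $f=\sum_{n\in\mathbb{Z}}U^nf_n(\mathbb{K})$ with $\sum_{n,k}|f_n(k)|^2<\infty$, and $\langle f,g\rangle=\sum_{n,k}\overline{f_n(k)}g_n(k)$. The reflection $\Theta:\mathcal{H}\to\mathcal{H}$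 is $\Theta f=\sum_nU^nf_n(-\mathbb{K}-n)$, i.e. $(\Theta f)_n(k)=f_n(-k-n)$. $\mathcal{H}^+=\{f\in\mathcal{H}: f_n(k)=0 \text{ whenever } n+2k<0\}$. Here $D_\beta$ is defined on those $f$ for which the series lies in $\mathcal{H}$. *)

(* Defs.v *)
From Stdlib Require Import Reals ZArith.
From Coquelicot Require Import Coquelicot.

Open Scope R_scope.

Definition convergent_increments (beta : Z -> R) : Prop :=
  (exists a : R, is_lim_seq (fun m : nat => beta (Z.of_nat m) - beta (Z.of_nat m - 1)%Z) a) /\
  (exists b : R, is_lim_seq (fun m : nat => beta (- Z.of_nat m)%Z - beta (- Z.of_nat m - 1)%Z) b).

(* An element f = sum_n U^n f_n(K) of H is represented by its coefficient
   array  f n k = f_n(k). *)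
Definition coeffs := Z -> Z -> C.

Definition boxsum (F : Z -> Z -> C) (N : nat) : C :=
  sum_n (fun i : nat =>
    sum_n (fun j : nat => F (Z.of_nat i - Z.of_nat N)%Z (Z.of_nat j - Z.of_nat N)%Z)
          (2 * N)%nat) (2 * N)%nat.

(* Hilbert–Schmidt: sum_{n,k} |f_n(k)|^2 < oo (nonnegative family with
   bounded partial sums). *)
Definition HS (f : coeffs) : Prop :=
  exists M : R, forall N : nat,
    Re (boxsum (fun n k => RtoC (Cmod (f n k) ^ 2)) N) <= M.

Definition Hplus (f : coeffs) : Prop :=
  HS f /\ forall n k : Z, (n + 2 * k < 0)%Z -> f n k = 0.

Definition Theta (f : coeffs) : coeffs := fun n k => f n (- k - n)%Z.

Definition Dbeta (beta : Z -> R) (f : coeffs) : coeffs :=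
  fun n k => (RtoC (beta (k + n)%Z + beta (- k)%Z) * f n k)%C.

Definition Dbeta_inv (beta : Z -> R) (f : coeffs) : coeffs :=
  fun n k => (RtoC (/ (beta (k + n)%Z + beta (- k)%Z)) * f n k)%C.

Definition dom_D (beta : Z -> R) (f : coeffs) : Prop := HS f /\ HS (Dbeta beta f).
Definition dom_Dinv (beta : Z -> R) (f : coeffs) : Prop := HS f /\ HS (Dbeta_inv beta f).

Definition inner_is (f g : coeffs) (v : C) : Prop :=
  filterlim (boxsum (fun n k => (Cconj (f n k) * g n k)%C)) eventually (locally v).

(* Main.v *)
Require Import Defs.
From Stdlib Require Import Reals ZArith Lia Lra FunctionalExtensionality.
From Coquelicot Require Import Coquelicot.

Open Scope R_scope.

Lemma rsum_le (a b : nat -> R) n : (forall i, a i <= b i) -> sum_n a n <= sum_n b n.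
Proof. intros H; unfold sum_n; apply sum_n_m_le; auto. Qed.

Lemma rsum_nonneg (a : nat -> R) n : (forall i, 0 <= a i) -> 0 <= sum_n a n.
Proof.
  intros H; induction n. rewrite sum_O; auto.
  rewrite sum_Sn. change (plus (sum_n a n) (a (S n))) with (sum_n a n + a (S n)).
  specialize (H (S n)); lra.
Qed.

Lemma rsum_plus (a b : nat -> R) n : sum_n (fun i => a i + b i) n = sum_n a n + sum_n b n.
Proof. apply (sum_n_plus a b n). Qed.

Lemma rsum_shift (a : nat -> R) n : sum_n a (S n) = a O + sum_n (fun i => a (S i)) n.
Proof.
  induction n. rewrite sum_Sn, !sum_O; reflexivity.
  rewrite sum_Sn, IHn, (sum_Sn _ n).
  change (a 0%nat + sum_n (fun i => a (S i)) n + a (S (S n)) =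
          a 0%nat + (sum_n (fun i => a (S i)) n + a (S (S n)))). ring.
Qed.

Lemma csum_RtoC (a : nat -> R) n : sum_n (fun i => RtoC (a i)) n = RtoC (sum_n a n).
Proof.
  induction n. rewrite !sum_O; reflexivity.
  rewrite !sum_Sn, IHn. change (RtoC (sum_n a n) + RtoC (a (S n)) = RtoC (sum_n a n + a (S n)))%C.
  rewrite RtoC_plus; reflexivity.
Qed.

Lemma step1 (a : Z -> R) N : (forall z, 0 <= a z) ->
  sum_n (fun j => a (Z.of_nat j - Z.of_nat N)%Z) (2 * N) <=
  sum_n (fun j => a (Z.of_nat j - Z.of_nat (S N))%Z) (2 * S N).
Proof.
  intros H.
  replace (2 * S N)%nat with (S (S (2 * N))) by lia.
  rewrite sum_Sn. change (plus ?x ?y) with (x + y).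
  rewrite rsum_shift.
  assert (E : sum_n (fun i => a (Z.of_nat (S i) - Z.of_nat (S N))%Z) (2 * N)
            = sum_n (fun j => a (Z.of_nat j - Z.of_nat N)%Z) (2 * N)).
  { apply sum_n_ext; intros i; f_equal; lia. }
  rewrite E. pose proof (H (Z.of_nat 0 - Z.of_nat (S N))%Z).
  pose proof (H (Z.of_nat (S (S (2 * N))) - Z.of_nat (S N))%Z). lra.
Qed.

Definition Row (h : Z -> Z -> R) N n := sum_n (fun j => h n (Z.of_nat j - Z.of_nat N)%Z) (2 * N).
Definition rbox (h : Z -> Z -> R) N := sum_n (fun i => Row h N (Z.of_nat i - Z.of_nat N)%Z) (2 * N).

Lemma rbox_incr h N : (forall n k, 0 <= h n k) -> rbox h N <= rbox h (S N).
Proof.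
  intros H. unfold rbox.
  eapply Rle_trans. apply (step1 (Row h N)).
  intros z; unfold Row; apply rsum_nonneg; auto.
  apply rsum_le; intros i. unfold Row. apply step1. auto.
Qed.

Lemma rbox_le h g N : (forall n k, h n k <= g n k) -> rbox h N <= rbox g N.
Proof. intros H; unfold rbox, Row; apply rsum_le; intros i; apply rsum_le; auto. Qed.

Lemma rbox_plus h g N : rbox (fun n k => h n k + g n k) N = rbox h N + rbox g N.
Proof.
  unfold rbox, Row. rewrite <- rsum_plus. apply sum_n_ext; intros i. apply rsum_plus.
Qed.

Lemma box_RtoC h N : boxsum (fun n k => RtoC (h n k)) N = RtoC (rbox h N).
Proof.
  unfold boxsum, rbox, Row. rewrite <- csum_RtoC. apply sum_n_ext; intros i. apply csum_RtoC.
Qed.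

Lemma HS_bound f : HS f -> exists M, forall N, rbox (fun n k => Cmod (f n k) ^ 2) N <= M.
Proof.
  intros [M HM]; exists M; intros N. specialize (HM N). rewrite box_RtoC in HM. exact HM.
Qed.

Lemma lim_RtoC (u : nat -> R) (l : R) : is_lim_seq u l -> filterlim (fun N => RtoC (u N)) eventually (locally (RtoC l)).
Proof.
  intros H. apply filterlim_locally. intros eps.
  apply is_lim_seq_spec in H. destruct (H eps) as [N HN]. exists N. intros n Hn.
  split; simpl. apply (HN n Hn). apply ball_center.
Qed.

Theorem mainTheorem2 (beta : Z -> R)
  (hinc : convergent_increments beta)
  (hpos : forall k : Z, 0 < beta k) :
  (* D_beta is invertible with the displayed inverse *)
  (forall f : coeffs, dom_D beta f -> Dbeta_inv beta (Dbeta beta f) = f) /\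
  (forall g : coeffs, dom_Dinv beta g ->
     dom_D beta (Dbeta_inv beta g) /\ Dbeta beta (Dbeta_inv beta g) = g) /\
  (* positivity *)
  (forall f : coeffs, Hplus f -> dom_Dinv beta f ->
     exists L : R, 0 <= L /\ inner_is (Theta f) (Dbeta_inv beta f) (RtoC L)).
Proof.
  assert (Hp : forall n k, 0 < beta (k + n)%Z + beta (- k)%Z).
  { intros n k; pose proof (hpos (k+n)%Z); pose proof (hpos (-k)%Z); lra. }
  assert (Inv1 : forall f, Dbeta_inv beta (Dbeta beta f) = f).
  { intros f; extensionality n; extensionality k; unfold Dbeta_inv, Dbeta.
    rewrite Cmult_assoc, <- RtoC_mult, Rinv_l, Cmult_1_l; auto. specialize (Hp n k); lra. }
  assert (Inv2 : forall f, Dbeta beta (Dbeta_inv beta f) = f).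
  { intros f; extensionality n; extensionality k; unfold Dbeta_inv, Dbeta.
    rewrite Cmult_assoc, <- RtoC_mult, Rinv_r, Cmult_1_l; auto. specialize (Hp n k); lra. }
  split; [intros; apply Inv1|]. split.
  { intros g [H1 H2]. split; [split; auto; rewrite Inv2; auto | apply Inv2]. }
  intros f [HSf Hsupp] [_ HSg].
  set (r := fun n k => / (beta (k + n)%Z + beta (- k)%Z)).
  assert (rpos : forall n k, 0 < r n k) by (intros; apply Rinv_0_lt_compat; auto).
  set (h := fun n k => if Z.eq_dec (n + 2 * k) 0 then r n k * Cmod (f n k) ^ 2 else 0).
  assert (Fh : (fun n k => (Cconj (Theta f n k) * Dbeta_inv beta f n k)%C) = fun n k => RtoC (h n k)).
  { extensionality n; extensionality k. unfold h, Theta, Dbeta_inv.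
    destruct (Z.eq_dec (n + 2 * k) 0) as [E|E].
    - replace (- k - n)%Z with k by lia. fold (r n k).
      rewrite RtoC_mult, Cmod2_conj. ring.
    - destruct (Z_lt_le_dec (n + 2 * k) 0).
      + rewrite (Hsupp n k); auto. rewrite !Cmult_0_r; reflexivity.
      + rewrite (Hsupp n (- k - n)%Z) by lia.
        apply injective_projections; simpl; ring. }
  assert (h0 : forall n k, 0 <= h n k).
  { intros n k; unfold h; destruct Z.eq_dec; [|lra].
    apply Rmult_le_pos; [left; auto | apply pow2_ge_0]. }
  assert (hb : forall n k, h n k <= Cmod (f n k) ^ 2 + Cmod (Dbeta_inv beta f n k) ^ 2).
  { intros n k. unfold h, Dbeta_inv. rewrite Cmod_mult, Cmod_R. fold (r n k).
    rewrite Rabs_pos_eq by (left; auto).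
    pose proof (rpos n k). pose proof (Cmod_ge_0 (f n k)).
    destruct Z.eq_dec; nra. }
  destruct (HS_bound _ HSf) as [M1 HM1].
  destruct (HS_bound _ HSg) as [M2 HM2].
  destruct (ex_finite_lim_seq_incr (rbox h) (M1 + M2)) as [l Hl].
  { intros N; apply rbox_incr; auto. }
  { intros N. eapply Rle_trans. apply rbox_le. exact hb. rewrite rbox_plus.
    specialize (HM1 N); specialize (HM2 N); lra. }
  exists l; split.
  { pose proof (is_lim_seq_le (fun _ => 0) (rbox h) 0 l) as Hle.
    simpl in Hle. apply Hle; auto. intros N. unfold rbox, Row.
    apply rsum_nonneg; intros; apply rsum_nonneg; auto.
    apply is_lim_seq_const. }
  unfold inner_is. rewrite Fh.
  apply (filterlim_ext (fun N => RtoC (rbox h N))).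
  { intros N. rewrite box_RtoC; reflexivity. }
  apply lim_RtoC; exact Hl.
Qed.
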